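(* Let $G$ be a finite group with $d(G)\geq 2$, and assume that $G$ is $2$-flexible. Then $G/\mathrm{Cyc}(G)$ is $1$-flexible.
   Context: For a finite group $H$, $d(H)$ denotes the minimal size of a generating set of $H$. For an integer $1 \leq k \leq d(H)$, a finite group $H$ is called $k$-flexible if for any $x_1,\dots,x_k \in H$ with $d(\langle x_1,\dots,x_k\rangle)=k$ there exist $x_{k+1},\dots,x_{d(H)} \in H$ such that $\langle x_1,\dots,x_{d(H)}\rangle = H$. The cycliciser of $G$ is $\mathrm{Cyc}(G) = \{c \in G \mid \langle c,g\rangle \text{ is cyclic for all } g \in G\}$; it is a normal subgroup of $G$. *)

(* Defs.v *)
From mathcomp Require Import all_boot all_fingroup all_solvable.
Set Implicit Arguments. Unset Strict Implicit. Unset Printing Implicit Defensive.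
Local Open Scope group_scope.

Definition dgen (gT : finGroupType) (H : {set gT}) : nat :=
  \big[minn/#|H|]_(A : {set gT} | (A \subset H) && (<<A>> == H)) #|A|.

Definition flexible (gT : finGroupType) (k : nat) (H : {set gT}) : Prop :=
  (1 <= k <= dgen H)%N /\
  forall x : k.-tuple gT,
    all (fun a => a \in H) x ->
    dgen <<[set:: x]>> = k ->
    exists y : (dgen H - k).-tuple gT,
      all (fun a => a \in H) y /\ <<[set:: (x : seq gT) ++ y]>> = H.

Definition Cyc (gT : finGroupType) (G : {set gT}) : {set gT} :=
  [set c in G | [forall g in G, cyclic <<[set c; g]>>]].

(* Main.v *)
Require Import Defs.
From mathcomp Require Import all_boot all_fingroup all_solvable zify.
Set Implicit Arguments. Unset Strict Implicit. Unset Printing Implicit Defensive.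
Local Open Scope group_scope.

Lemma bigmin_le_seq (T : eqType) (r : seq T) (P : pred T) (F : T -> nat) idx i0 :
  i0 \in r -> P i0 -> (\big[minn/idx]_(i <- r | P i) F i <= F i0)%N.
Proof.
elim: r => [//|a r IH]; rewrite inE big_cons => /orP [/eqP <- -> | ir Pi0].
  exact: geq_minl.
case: (P a); last exact: IH.
exact: leq_trans (geq_minr _ _) (IH ir Pi0).
Qed.

Lemma dgen_le (gT : finGroupType) (H : {set gT}) (A : {set gT}) :
  A \subset H -> <<A>> = H -> (dgen H <= #|A|)%N.
Proof.
move=> sAH gA; rewrite /dgen.
apply: bigmin_le_seq; first exact: mem_index_enum.
by rewrite /= sAH gA eqxx.
Qed.

Lemma dgen_ex (gT : finGroupType) (H : {group gT}) :
  exists2 A : {set gT}, (A \subset H) && (<<A>> == H) & #|A| = dgen H.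
Proof.
rewrite /dgen.
apply: (big_rec (fun x => exists2 A : {set gT}, (A \subset H) && (<<A>> == H) & #|A| = x)).
  by exists (gval H); rewrite // subxx genGid eqxx.
move=> A x PA [B PB eB].
case: (leqP #|A| x) => h.
  by exists A; rewrite // (minn_idPl h).
by exists B; rewrite // (minn_idPr (ltnW h)).
Qed.

Lemma dgen2 (gT : finGroupType) (x g : gT) :
  ~~ cyclic <<[set x; g]>> -> dgen <<[set x; g]>> = 2.
Proof.
move=> ncyc; apply/eqP; rewrite eqn_leq; apply/andP; split.
  apply: leq_trans (dgen_le (subset_gen _) (erefl _)) _.
  by rewrite cards2; case: (x == g).
have [A /andP [sAH /eqP gA] <-] := dgen_ex [group of <<[set x; g]>>].
rewrite ltnNge; apply: contra ncyc => le1.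
rewrite /= -gA.
move: le1; rewrite leq_eqVlt ltnS leqn0 => /orP [/cards1P [a ->] | /eqP /cards0_eq ->].
  exact: cycle_cyclic.
by rewrite gen0 cyclic1.
Qed.

Lemma dgen1 (gT : finGroupType) : dgen (1 : {set gT}) = 0%N.
Proof.
by apply/eqP; rewrite -leqn0; apply: leq_trans (dgen_le (sub0set _) (gen0 _)) _; rewrite cards0.
Qed.

Lemma CycP (gT : finGroupType) (G : {group gT}) c :
  c \in Cyc G -> c \in G /\ forall g, g \in G -> cyclic <<[set c; g]>>.
Proof.
by rewrite inE => /andP [cG /forall_inP h].
Qed.

Lemma cyc2 (gT : finGroupType) (G : {group gT}) c g :
  c \in Cyc G -> g \in G -> exists2 z, z \in G & (c \in <[z]>) && (g \in <[z]>).
Proof.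
move=> /CycP [cG h] gG; have /cyclicP [z ez] := h g gG.
exists z; last by rewrite -ez !mem_gen // ?set21 ?set22.
have : z \in <[z]> by exact: cycle_id.
rewrite -ez; apply/subsetP; rewrite gen_subG; apply/subsetP => y.
by rewrite !inE => /orP [] /eqP ->.
Qed.

Lemma cyc_sub (gT : finGroupType) (A : {set gT}) z : A \subset <[z]> -> cyclic <<A>>.
Proof. by move=> sA; apply: (cyclicS (G := <[z]>%G)) (cycle_cyclic z); rewrite /= gen_subG. Qed.

Lemma Cyc_group_set (gT : finGroupType) (G : {group gT}) : group_set (Cyc G).
Proof.
apply/group_setP; split.
  rewrite inE group1 /=; apply/forall_inP => g gG.
  by apply: (cyc_sub (z := g)); apply/subsetP => y; rewrite !inE => /orP [] /eqP ->;
    rewrite ?group1 ?cycle_id.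
move=> c1 c2 h1 h2; have [c1G _] := CycP h1; have [c2G _] := CycP h2.
rewrite inE groupM //=; apply/forall_inP => g gG.
have [z zG /andP [c1z gz]] := cyc2 h1 gG.
have [w wG /andP [c2w zw]] := cyc2 h2 zG.
have szw : <[z]> \subset <[w]> by rewrite cycle_subG.
apply: (cyc_sub (z := w)); apply/subsetP => y; rewrite !inE => /orP [] /eqP ->.
  by rewrite groupM // (subsetP szw).
by rewrite (subsetP szw).
Qed.

Lemma CycJ (gT : finGroupType) (G : {group gT}) c h :
  c \in Cyc G -> h \in G -> c ^ h \in Cyc G.
Proof.
move=> /CycP [cG hc] hG; rewrite inE groupJ //=; apply/forall_inP => g gG.
have -> : [set c ^ h; g] = [set c; g ^ h^-1] :^ h.
  by rewrite conjUg !conjg_set1 conjgKV.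
by rewrite genJ cyclicJ hc // groupJ ?groupV.
Qed.

Lemma Cyc_norm (gT : finGroupType) (G : {group gT}) : G \subset 'N(Cyc G).
Proof.
apply/subsetP => h hG; rewrite inE; apply/subsetP => y; rewrite mem_conjg => hy.
by rewrite -(conjgKV h y); apply: CycJ; rewrite ?groupV.
Qed.

Lemma Cyc_sub (gT : finGroupType) (G : {group gT}) : Cyc G \subset G.
Proof. by apply/subsetP => c /CycP []. Qed.

Lemma absorb (gT : finGroupType) (G : {group gT}) (s : seq gT) a :
  a \in G -> all (fun c => c \in Cyc G) s ->
  exists2 a', a' \in G & (a \in <[a']>) && all (fun c => c \in <[a']>) s.
Proof.
move=> aG; elim: s => [|c s IH] /=.
  by exists a; rewrite // cycle_id.
move=> /andP [cC /IH [a1 a1G /andP [aa1 sa1]]].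
have [z zG /andP [cz a1z]] := cyc2 cC a1G.
have sub : <[a1]> \subset <[z]> by rewrite cycle_subG.
exists z => //; rewrite (subsetP sub) //= cz /=.
by apply/allP => y ys; rewrite (subsetP sub) //; apply: (allP sa1).
Qed.

Lemma dgen_absorb (gT : finGroupType) (G : {group gT}) (A : {set gT}) :
  A \subset G -> G \subset <<A :|: Cyc G>> -> (dgen G <= maxn #|A| 1)%N.
Proof.
move=> sAG sGA.
pose a0 := odflt 1 [pick a in A].
have a0G : a0 \in G.
  by rewrite /a0; case: pickP => [a /= aA|_] /=; rewrite ?group1 ?(subsetP sAG).
have [a' a'G /andP [a0a' sC]] := absorb (s := enum (Cyc G)) a0G
   (introT allP (fun c (h : c \in enum (Cyc G)) => eq_ind _ is_true h _ (mem_enum _ c))).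
pose A' := a' |: (A :\ a0).
have sA'G : A' \subset G.
  apply/subsetP => y; rewrite !inE => /orP [/eqP -> // | /andP [_ yA]].
  exact: (subsetP sAG).
have gA' : <<A'>> = G.
  apply/eqP; rewrite eqEsubset gen_subG sA'G /=.
  apply: (subset_trans sGA); rewrite gen_subG; apply/subsetP => y.
  have sa' : <[a']> \subset <<A'>> by rewrite cycle_subG mem_gen // setU11.
  rewrite inE => /orP [yA | yC].
    case: (eqVneq y a0) => [-> | ne]; first by rewrite (subsetP sa').
    by rewrite mem_gen // !inE ne yA orbT.
  by rewrite (subsetP sa') //; apply: (allP sC); rewrite mem_enum.
apply: leq_trans (dgen_le sA'G gA') _.
rewrite cardsU1; move: a0G; rewrite /a0; case: pickP => [a /= aA|/= A0] _.
  rewrite (cardsD1 a A) aA; apply: leq_trans (leq_maxl _ _).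
  by case: (a' \notin _).
have -> : A :\ 1 = set0.
  by apply/setP => y; rewrite !inE A0 andbF.
rewrite cards0 addn0; apply: leq_trans (leq_maxr _ _); by case: (_ \notin _).
Qed.

Lemma repr_in (gT : finGroupType) (G C : {group gT}) (xb : coset_of C) :
  C \subset G -> G \subset 'N(C) -> xb \in G / C -> repr xb \in G.
Proof.
move=> sCG nCG xbG.
have : repr xb \in coset C @*^-1 (G / C).
  by apply: (mem_morphpre (repr_coset_norm xb)); rewrite /= coset_reprK.
by rewrite quotientK // mulSGid.
Qed.

Theorem corollary2p6 (gT : finGroupType) (G : {group gT}) :
  (2 <= dgen G)%N -> flexible 2 G -> flexible 1 (G / Cyc G).
Proof.
move=> d2 [_ flex2].
pose CG : {group gT} := Group (Cyc_group_set G).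
change (flexible 1 (G / CG)).
have nCG : G \subset 'N(CG) := Cyc_norm G.
have sCG : CG \subset G := Cyc_sub G.
have dm : (dgen G <= dgen (G / CG))%N.
  have [Ab /andP [sAb /eqP gAb] eAb] := dgen_ex (G / CG)%G.
  pose A := [set (repr xb : gT) | xb : coset_of CG in Ab].
  have sAG : A \subset G.
    apply/subsetP => y /imsetP [xb xbA ->]; apply: repr_in => //.
    exact: (subsetP sAb).
  have sGA : G \subset <<A :|: CG>>.
    have sC : CG \subset <<A :|: CG>>%G by apply: subset_trans (subset_gen _); apply: subsetUr.
    rewrite -(quotientSGK nCG sC) /= -gAb gen_subG; apply/subsetP => xb xbA.
    rewrite -(coset_reprK xb); apply: (@mem_quotient _ CG); rewrite mem_gen // inE; apply/orP; left; exact: imset_f.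
  have := dgen_absorb sAG sGA.
  have cA : (#|A| <= dgen (G / CG))%N by rewrite -eAb leq_imset_card.
  move=> h; move: cA d2 h; rewrite /=; lia.
split; first by apply/andP; split => //; lia.
case => [[|xb [|? ?]] //= _].
rewrite andbT set_cons set_nil setU0 => xbG dx.
have x1 : xb != 1.
  apply/eqP => e; move: dx; rewrite e.
  have h1 : <<[set (1 : coset_of CG)]>> = 1 := cycle1 _.
  by rewrite h1 dgen1.
pose x := repr xb.
have xG : x \in G by apply: repr_in.
have xbE : coset CG x = xb by rewrite /x coset_reprK.
have xnC : x \notin CG by apply: contra x1 => xC; rewrite -xbE coset_id.
have : ~~ [forall g in G, cyclic <<[set x; g]>>] by move: xnC; rewrite inE xG.
case/forall_inPn => g gG ncyc.
have [y [ally gy]] : exists y : (dgen G - 2).-tuple gT,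
    all (fun a => a \in G) y /\ <<[set:: ([tuple x; g] : seq gT) ++ y]>> = G.
  apply: flex2; first by rewrite /= xG gG.
  by rewrite /= !set_cons set_nil setU0 dgen2.
pose s' := map (coset CG) (g :: y) ++ nseq (dgen (G / CG) - 1 - (dgen G - 1)) 1.
have szs : size s' == (dgen (G / CG) - 1)%N.
  rewrite size_cat size_map size_nseq /= size_tuple; apply/eqP; move: dm d2; rewrite /CG /=; lia.
have hall : all (fun a => a \in G / CG) (xb :: s').
  rewrite /= xbG all_cat /= (@mem_quotient _ CG) //=; apply/andP; split.
    by apply/allP => z /mapP [w wy ->]; rewrite (@mem_quotient _ CG) // (allP ally).
  by apply/allP => z; rewrite mem_nseq => /andP [_ /eqP ->]; rewrite group1.
exists (Tuple szs); split; first by move: hall => /= /andP [].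
apply/eqP; rewrite eqEsubset gen_subG; apply/andP; split.
  by apply/subsetP => z; rewrite inE => /(allP hall).
have sS : [set:: x :: g :: y] \subset 'N(CG).
  apply: subset_trans nCG; apply/subsetP => w; rewrite inE /= !inE.
  by case/or3P => [/eqP -> | /eqP -> | wy] //; exact: (allP ally).
have sGS : G \subset <<[set:: x :: g :: y]>> by rewrite /= in gy; rewrite gy.
apply: subset_trans (quotientS CG sGS) _.
rewrite quotientE morphim_gen //; apply: genS.
apply/subsetP => z /morphimP [w _ wS ->]; rewrite inE /=.
move: wS; rewrite inE /= => /orP [/eqP -> | wgy]; first by rewrite xbE mem_head.
by rewrite inE mem_cat map_f ?orbT.
Qed.
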